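(* Let $\phi:\mathbb{R}\to\mathbb{R}$ be differentiable, $f(z)=A\phi(Bz)$ with $A\in\mathbb{R}^{k_0\times k}$, $B\in\mathbb{R}^{k\times k_0}$, and $x\in\mathbb{R}^{k_0}$ with $\|x\|_2=1$. Run gradient descent on $\mathcal{L}(x,f)=\frac12\|x-f(x)\|_2^2$ from $A^{(0)}=x{a^{(0)}}^T$, $B^{(0)}=b^{(0)}x^T$ ($a^{(0)},b^{(0)}\in\mathbb{R}^k$). If the final weights $A^{(\infty)},B^{(\infty)}$ yield zero training error, then $A^{(\infty)}=xa^T$ and $B^{(\infty)}=bx^T$ for some $a,b\in\mathbb{R}^k$ with $a^T\phi(b)=1$.
   Context: $\phi$ is applied coordinatewise. Gradient descent updates $A\leftarrow A-\gamma\nabla_A\mathcal{L}$, $B\leftarrow B-\gamma\nabla_B\mathcal{L}$; $A^{(\infty)},B^{(\infty)}$ denote the weights at the end of training. *)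

(* Defs.v *)
From HB Require Import structures.
From mathcomp Require Import all_boot all_order all_algebra.
From mathcomp Require Import all_classical all_reals all_analysis.
Set Implicit Arguments. Unset Strict Implicit. Unset Printing Implicit Defensive.
Import Order.TTheory GRing.Theory Num.Theory.
Local Open Scope ring_scope.
Local Open Scope classical_set_scope.

Section Defs.
Variables (R : realType) (k0 k : nat) (phi : R -> R).

Definition phiv (z : 'cV[R]_k) : 'cV[R]_k := map_mx phi z.

Definition net (A : 'M[R]_(k0, k)) (B : 'M[R]_(k, k0)) (z : 'cV[R]_k0)
  : 'cV[R]_k0 := A *m phiv (B *m z).

Definition sqnorm n (v : 'cV[R]_n) : R := \sum_(i < n) (v i 0) ^+ 2.

Definition loss (x : 'cV[R]_k0) A B : R :=
  2^-1 * sqnorm (x - net A B x).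

Definition gradA x (A : 'M[R]_(k0, k)) B : 'M[R]_(k0, k) :=
  \matrix_(i, j) derive1 (fun t : R => loss x (A + t *: delta_mx i j) B) 0.

Definition gradB x (A : 'M[R]_(k0, k)) (B : 'M[R]_(k, k0)) : 'M[R]_(k, k0) :=
  \matrix_(i, j) derive1 (fun t : R => loss x A (B + t *: delta_mx i j)) 0.

Definition gd_traj x (gamma : R) (Ah : nat -> 'M[R]_(k0, k))
  (Bh : nat -> 'M[R]_(k, k0)) : Prop :=
  forall n, Ah n.+1 = Ah n - gamma *: gradA x (Ah n) (Bh n) /\
            Bh n.+1 = Bh n - gamma *: gradB x (Ah n) (Bh n).

Definition final_weights (Ah : nat -> 'M[R]_(k0, k)) (Bh : nat -> 'M[R]_(k, k0))
  Ainf Binf : Prop :=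
  (exists T, Ainf = Ah T /\ Binf = Bh T) \/
  ((forall i j, (fun n : nat => (Ah n i j : R^o)) @ \oo --> (Ainf i j : R^o)) /\
   (forall i j, (fun n : nat => (Bh n i j : R^o)) @ \oo --> (Binf i j : R^o))).
End Defs.

(* Main.v *)
Require Import Defs.
From HB Require Import structures.
From mathcomp Require Import all_boot all_order all_algebra.
From mathcomp Require Import all_classical all_reals all_analysis.
Import Order.TTheory GRing.Theory Num.Theory.
Local Open Scope ring_scope.
Local Open Scope classical_set_scope.

Section H.
Variable R : realType.

Lemma quad_derive n (u : 'I_n -> R -> R) (du : 'I_n -> R) :
  (forall m, is_derive (0:R) (1:R) (u m) (du m)) ->
  is_derive (0:R) (1:R) (fun t => 2^-1 * \sum_m (u m t)^+2) (\sum_m u m 0 * du m).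
Proof.
move=> hu.
have -> : (fun t => 2^-1 * \sum_m (u m t)^+2) = 2^-1 \*: (\sum_m (u m)^+2).
  by apply/funext => t /=; rewrite fct_sumE.
apply: is_derive_eq.
rewrite scaler_sumr; apply: eq_bigr => m _.
rewrite /GRing.scale /= !mulrA mulVf ?pnatr_eq0 // mul1r expr1.
by [].
Qed.

Lemma aff_derive (phi : R -> R) (phi_diff : forall t : R, derivable phi t 1) (c d : R) :
  is_derive (0:R) (1:R) (fun t => phi (c + t * d)) (d * derive1 phi c).
Proof.
have haff : is_derive (0:R) (1:R) (fun t : R => c + t * d) d.
  have -> : (fun t : R => c + t * d) = cst c + (id * cst d).
    by apply/funext => t.
  apply: is_derive_eq.
  by rewrite scaler0 !add0r /GRing.scale /= mulr1.
have hd : derivable (fun t : R => c + t * d) 0 1 by case: haff.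
apply: DeriveDef.
  apply/derivable1_diffP; apply: differentiable_comp.
    exact/derivable1_diffP.
  exact/derivable1_diffP.
rewrite -derive1E.
have -> : (fun t => phi (c + t * d)) = phi \o (fun t : R => c + t * d) by [].
rewrite derive1_comp //.
by rewrite mul0r addr0 mulrC derive1E derive_val.
Qed.
Lemma derive1_of (f : R -> R) df : is_derive (0:R) (1:R) f df -> derive1 f 0 = df.
Proof. by case=> _ <-; rewrite derive1E. Qed.

Lemma lin_derive (r e : R) : is_derive (0:R) (1:R) (fun t : R => r + t * e) e.
Proof.
have -> : (fun t : R => r + t * e) = cst r + (id * cst e) by apply/funext => t.
apply: is_derive_eq.
by rewrite scaler0 !add0r /GRing.scale /= mulr1.
Qed.

Lemma delta_mulE m n (i : 'I_m) (j : 'I_n) (v : 'cV[R]_n) l :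
  (delta_mx i j *m v) l 0 = (l == i)%:R * v j 0.
Proof.
rewrite mxE (bigD1 j) //= big1 ?addr0; first by rewrite mxE eqxx andbT.
by move=> l' hl'; rewrite mxE (negbTE hl') andbF mul0r.
Qed.

Lemma gradA_eq k0 k (phi : R -> R) (x : 'cV[R]_k0) A (B : 'M[R]_(k, k0)) :
  gradA phi x A B = - ((x - net phi A B x) *m (phiv phi (B *m x))^T).
Proof.
apply/matrixP => i j; rewrite !mxE.
set r := x - net phi A B x; set p := phiv phi (B *m x).
have -> : (fun t => loss phi x (A + t *: delta_mx i j) B) =
   fun t => 2^-1 * \sum_m (r m 0 + t * - (delta_mx i j *m p) m 0)^+2.
  apply/funext => t; rewrite /loss /sqnorm /net; congr (_ * _).
  apply: eq_bigr => m _; congr (_ ^+ 2).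
  by rewrite /r /net mulmxDl -scalemxAl !mxE mulrN opprD addrA.
rewrite (@derive1_of _ _ (@quad_derive _ _ _ (fun m => lin_derive (r m 0) (- (delta_mx i j *m p) m 0)))).
rewrite big_ord1 [p^T _ _]mxE.
under eq_bigr do rewrite mul0r addr0.
rewrite (bigD1 i) //= big1 ?addr0.
  by rewrite delta_mulE eqxx mul1r mulrN.
by move=> m hm; rewrite delta_mulE (negbTE hm) mul0r oppr0 mulr0.
Qed.

Lemma gradB_eq k0 k (phi : R -> R) (phi_diff : forall t : R, derivable phi t 1)
  (x : 'cV[R]_k0) (A : 'M[R]_(k0, k)) (B : 'M[R]_(k, k0)) :
  gradB phi x A B = - ((\col_i ((\sum_m (x - net phi A B x) m 0 * A m i)
                          * derive1 phi ((B *m x) i 0))) *m x^T).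
Proof.
apply/matrixP => i j.
set r := x - net phi A B x; set c := B *m x; set d := delta_mx i j *m x.
rewrite !mxE.
set u := fun m : 'I_k0 => (cst (x m 0) - \sum_l (A m l \*: (fun t => phi (c l 0 + t * d l 0)))).
have -> : (fun t => loss phi x A (B + t *: delta_mx i j)) =
   fun t => 2^-1 * \sum_m (u m t)^+2.
  apply/funext => t; rewrite /loss /sqnorm; congr (_ * _).
  apply: eq_bigr => m _; congr (_ ^+ 2).
  rewrite /u /net mulmxDl -scalemxAl -/c -/d !mxE /= fct_sumE; congr (_ - _).
  by apply: eq_bigr => l _; rewrite !mxE.
have hu : forall m, is_derive (0:R) (1:R) (u m)
    (0 - \sum_l A m l *: (d l 0 * derive1 phi (c l 0))).
  move=> m; apply: is_deriveB.
  apply: is_derive_sum => l; apply: is_deriveZ; exact: aff_derive.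
rewrite (@derive1_of _ _ (@quad_derive _ _ _ hu)).
have hu0 : forall m, u m 0 = r m 0.
  move=> m; rewrite /u /= fct_sumE /r /net [in RHS]mxE [in RHS]mxE; congr (_ - _).
  rewrite mxE -/c.
  by apply: eq_bigr => l _; rewrite /= mul0r addr0 /phiv [in RHS]mxE.
have hin : forall m, \sum_l A m l *: (d l 0 * derive1 phi (c l 0)) =
    A m i * (x j 0 * derive1 phi (c i 0)).
  move=> m; rewrite (bigD1 i) //= big1 ?addr0; first by rewrite /d delta_mulE eqxx mul1r.
  by move=> l hl; rewrite /d delta_mulE (negbTE hl) !mul0r /GRing.scale /= mulr0.
rewrite big_ord1 [x^T _ _]mxE mxE -mulrA mulr_suml -sumrN.
apply: eq_bigr => m _; rewrite hu0 hin sub0r.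
by rewrite mulrN mulrA -!mulrA [x j 0 * _]mulrC.
Qed.

Lemma lim_sum_mul m (u : 'I_m -> nat -> R) (L : 'I_m -> R) (c : 'I_m -> R) :
  (forall l, (fun n => (u l n : R^o)) @ \oo --> (L l : R^o)) ->
  (fun n => (\sum_l c l * u l n : R^o)) @ \oo --> (\sum_l c l * L l : R^o).
Proof.
move=> h.
apply: (@cvg_big _ _ +%R 0 xpredT (@add_continuous R^o)) => //.
move=> l _; apply: (@cvgMr _ _ _ _ _ (c l) _ (h l)); exact: eventually_filter.
Qed.

Lemma lim_eq (F G : nat -> R) (l1 l2 : R) :
  F = G -> (fun n => (F n : R^o)) @ \oo --> (l1 : R^o) ->
  (fun n => (G n : R^o)) @ \oo --> (l2 : R^o) -> l1 = l2.
Proof.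
move=> -> h1 h2; exact: (cvg_unique _ h1 h2).
Qed.

End H.

Theorem proposition3 (R : realType) (k0 k : nat) (phi : R -> R)
  (phi_diff : forall t : R, derivable phi t 1)
  (x : 'cV[R]_k0) (hx : sqnorm x = 1)
  (a0 b0 : 'cV[R]_k) (gamma : R) (hgamma : 0 < gamma)
  (Ah : nat -> 'M[R]_(k0, k)) (Bh : nat -> 'M[R]_(k, k0))
  (hA0 : Ah 0%N = x *m a0^T) (hB0 : Bh 0%N = b0 *m x^T)
  (hgd : gd_traj phi x gamma Ah Bh)
  (Ainf : 'M[R]_(k0, k)) (Binf : 'M[R]_(k, k0))
  (hfin : final_weights Ah Bh Ainf Binf)
  (hzero : loss phi x Ainf Binf = 0) :
  exists a b : 'cV[R]_k,
    Ainf = x *m a^T /\ Binf = b *m x^T /\ (a^T *m phiv phi b) 0 0 = 1.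
Proof.
have hxx : x^T *m x = 1%:M.
  apply/matrixP => i j; rewrite !ord1 !mxE -hx /sqnorm.
  by apply: eq_bigr => l _; rewrite mxE expr2.
have Bx : forall b : 'cV[R]_k, (b *m x^T) *m x = b.
  by move=> b; rewrite -mulmxA hxx mulmx1.
have inv : forall n, exists a b : 'cV[R]_k, Ah n = x *m a^T /\ Bh n = b *m x^T.
  elim => [|n [a [b [hA hB]]]]; first by exists a0, b0.
  have [hA' hB'] := hgd n.
  set p := phiv phi b.
  have hr : x - net phi (Ah n) (Bh n) x = x *m (1%:M - a^T *m p).
    by rewrite /net hB Bx hA mulmxBr mulmx1 mulmxA.
  set g := \col_i ((\sum_m (x - net phi (Ah n) (Bh n) x) m 0 * Ah n m i)
                          * derive1 phi ((Bh n *m x) i 0)).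
  exists (a^T + gamma *: ((1%:M - a^T *m p) *m p^T))^T, (b + gamma *: g).
  split.
    rewrite hA' gradA_eq hr hA hB Bx -/p trmxK scalerN opprK [RHS]mulmxDr.
    by rewrite scalemxAr -mulmxA scalemxAr.
  by rewrite hB' (@gradB_eq _ _ _ _ phi_diff) -/g hB scalerN opprK mulmxDl scalemxAl.
have [a [b [hA hB]]] : exists a b : 'cV[R]_k, Ainf = x *m a^T /\ Binf = b *m x^T.
  case: hfin => [[T [-> ->]]|[hA1 hB1]]; first exact: inv.
  have hP : forall n, Ah n = (x *m x^T) *m Ah n.
    by move=> n; have [a [b [hA _]]] := inv n; rewrite hA mulmxA -(mulmxA x) hxx mulmx1.
  have hQ : forall n, Bh n = Bh n *m (x *m x^T).
    by move=> n; have [a [b [_ hB]]] := inv n; rewrite hB mulmxA Bx.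
  have eA : Ainf = (x *m x^T) *m Ainf.
    apply/matrixP => i j; rewrite [RHS]mxE.
    apply: (@lim_eq _ (fun n => Ah n i j) (fun n => \sum_l (x *m x^T) i l * Ah n l j)).
    - by apply/funext => n; rewrite {1}hP mxE.
    - exact: hA1.
    - exact: (@lim_sum_mul _ _ (fun l n => Ah n l j) (fun l => Ainf l j) (fun l => (x *m x^T) i l) (fun l => hA1 l j)).
  have eB : Binf = Binf *m (x *m x^T).
    apply/matrixP => i j; rewrite [RHS]mxE.
    apply: (@lim_eq _ (fun n => Bh n i j) (fun n => \sum_l (x *m x^T) l j * Bh n i l)).
    - by apply/funext => n; rewrite {1}hQ mxE; apply: eq_bigr => l _; rewrite mulrC.
    - exact: hB1.
    - under eq_bigr do rewrite mulrC.
      exact: (@lim_sum_mul _ _ (fun l n => Bh n i l) (fun l => Binf i l) (fun l => (x *m x^T) l j) (fun l => hB1 i l)).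
  exists (Ainf^T *m x), (Binf *m x); split.
    by rewrite trmx_mul trmxK mulmxA -eA.
  by rewrite -mulmxA -eB.
exists a, b; split => //; split => //.
set s := (a^T *m phiv phi b) 0 0.
have hv : x - net phi Ainf Binf x = (1 - s) *: x.
  by rewrite /net hB Bx hA -mulmxA [a^T *m _]mx11_scalar mul_mx_scalar scalerBl scale1r.
move: hzero; rewrite /loss hv.
have -> : sqnorm ((1 - s) *: x) = (1 - s) ^+ 2 * sqnorm x.
  by rewrite /sqnorm mulr_sumr; apply: eq_bigr => l _; rewrite mxE exprMn.
rewrite hx mulr1 => /eqP; rewrite mulf_eq0 invr_eq0 pnatr_eq0 /= expf_eq0 /= subr_eq0.
by move/eqP.
Qed.
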